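(* Let $V$ be a complex vector space of dimension $N$, $\underline v=(v_1,\dots,v_N)$ a basis of $V$, $\underline a\in\mathbb R^N$, $\|\cdot\|$ a Hermitian norm on $V$ admitting $\underline v$ as an orthogonal basis, and $\|\cdot\|'$ an arbitrary norm on $V$. Then for every $p\in[1,\infty]$, $$d_p\big(\iota_{\underline v}(\|\cdot\|,\underline a),\iota^1_{\underline v}(\|\cdot\|',\underline a)\big)\le d_\infty(\|\cdot\|,\|\cdot\|')+\log N.$$
   Context: For two norms $\|\cdot\|,\|\cdot\|'$ on $V$ ($\dim V=N$), the successive minima are $\lambda_i(\|\cdot\|,\|\cdot\|')=\sup_{W\in\mathrm{Grass}_i(V)}\inf_{w\in W\setminus\{0\}}\log(\|w\|'/\|w\|)$, $i=1,\dots,N$; for $p\in[1,\infty)$, $d_p(\|\cdot\|,\|\cdot\|')^p=N^{-1}\sum_i|\lambda_i|^p$ and $d_\infty=\max_i|\lambda_i|$. Given a Hermitian norm $\|\cdot\|$ with orthogonal basis $\underline v$ and $\underline a\in\mathbb R^N$, $\iota_{\underline v}(\|\cdot\|,\underline a)$ is the Hermitian norm with orthogonal basis $\underline v$ and $\iota_{\underline v}(\|\cdot\|,\underline a)(v_i)=\|v_i\|e^{-a_i}$. For any norm $\|\cdot\|'$, let $\|\cdot\|^{NA}_{\underline v,\underline a}$ be the non-Archimedean norm $\|\sum\alpha_iv_i\|^{NA}_{\underline v,\underline a}=\max_{i:\alpha_i\ne0}e^{-a_i}$, and define $\iota^1_{\underline v}(\|\cdot\|',\underline a)(w)=\inf\{\sum_j\|w_j\|'\,\|w_j\|^{NA}_{\underline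 v,\underline a}: w=\sum_j w_j\}$, the infimum over all finite decompositions of $w$ as a sum of vectors of $V$. *)

(* Defs.v *)
From HB Require Import structures.
From mathcomp Require Import all_boot all_order all_algebra.
From mathcomp Require Import complex.
From mathcomp Require Import all_classical all_reals.
From mathcomp Require Import sequences exp.
Set Implicit Arguments. Unset Strict Implicit. Unset Printing Implicit Defensive.
Import Order.TTheory GRing.Theory Num.Theory.
Local Open Scope ring_scope.
Local Open Scope classical_set_scope.

Section Defs.
Variables (R : realType) (N : nat).
Local Notation C := (R[i]).
Local Notation V := ('rV[C]_N).

Definition cmod (c : C) : R := Num.sqrt (complex.Re c ^+ 2 + complex.Im c ^+ 2).

Definition is_norm (n : V -> R) : Prop :=
  [/\ forall x, x != 0 -> 0 < n x,
      forall (c : C) x, n (c *: x) = cmod c * n x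
    & forall x y, n (x + y) <= n x + n y].

Definition hermitian_form (h : V -> V -> C) : Prop :=
  [/\ forall (c : C) x y z, h (c *: x + y) z = c * h x z + h y z,
      forall x y, h y x = ((h x y)^*)%C
    & forall x, x != 0 -> 0 < complex.Re (h x x)].

Definition hermitian_orth (v : 'I_N -> V) (n : V -> R) : Prop :=
  exists h, [/\ hermitian_form h,
    forall x, n x = Num.sqrt (complex.Re (h x x))
  & forall i j, i != j -> h (v i) (v j) = 0].

Definition basis_mx (v : 'I_N -> V) : 'M[C]_N := \matrix_(i, j) v i 0 j.
Definition is_basis (v : 'I_N -> V) : Prop := basis_mx v \in unitmx.

(* coordinates of w in the basis v : w = sum_i (coord v w i) v_i *)
Definition coord (v : 'I_N -> V) (w : V) (i : 'I_N) : C :=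
  (w *m invmx (basis_mx v)) 0 i.

(* iota_v(||.||, a): the Hermitian norm with orthogonal basis v and
   iota(v_i) = ||v_i|| e^{-a_i}; characterised by this property. *)
Definition is_iota (v : 'I_N -> V) (n : V -> R) (a : 'I_N -> R)
  (n1 : V -> R) : Prop :=
  hermitian_orth v n1 /\ forall i, n1 (v i) = n (v i) * expR (- a i).

(* non-Archimedean norm ||sum alpha_i v_i||^NA = max_{alpha_i != 0} e^{-a_i}
   (max over the empty set is 0) *)
Definition na_norm (v : 'I_N -> V) (a : 'I_N -> R) (w : V) : R :=
  \big[Num.max/0]_(i | coord v w i != 0) expR (- a i).

Definition iota1 (v : 'I_N -> V) (n : V -> R) (a : 'I_N -> R) (w : V) : R :=
  inf [set s | exists ws : seq V, \sum_(u <- ws) u = w /\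
               s = \sum_(u <- ws) n u * na_norm v a u].

(* successive minima lambda_{i+1}(n1, n2), i : 'I_N *)
Definition succ_min (n1 n2 : V -> R) (i : 'I_N) : R :=
  sup [set x | exists W : 'M[C]_N, \rank W = i.+1 /\
     x = inf [set y | exists w : V, [/\ (w <= W)%MS, w != 0 &
                 y = ln (n2 w / n1 w)]]].

Definition dist_p (p : \bar R) (n1 n2 : V -> R) : R :=
  match p with
  | EFin r => powR (N%:R^-1 * \sum_(i < N) powR `|succ_min n1 n2 i| r) r^-1
  | _ => \big[Num.max/0]_(i < N) `|succ_min n1 n2 i|
  end.

End Defs.

(* Main.v *)
Require Import Defs.
From HB Require Import structures.
From mathcomp Require Import all_boot all_order all_algebra.
From mathcomp Require Import complex.
From mathcomp Require Import all_classical all_reals.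
From mathcomp Require Import sequences exp.
From mathcomp Require Import all_analysis.
From mathcomp Require Import ring lra.
Import Order.TTheory GRing.Theory Num.Theory numFieldTopology.Exports numFieldNormedType.Exports.
Set Implicit Arguments. Unset Strict Implicit. Unset Printing Implicit Defensive.
Local Open Scope ring_scope.
Local Open Scope complex_scope.
Local Notation coord := Defs.coord.

Section Cmod.
Variable R : realType.
Lemma cmodE (z : R[i]) : `|z| = (cmod z)%:C.
Proof. by rewrite normc_def. Qed.
Lemma cmod_ge0 (z : R[i]) : 0 <= cmod z.
Proof. exact: sqrtr_ge0. Qed.
Lemma cmodM (a b : R[i]) : cmod (a * b) = cmod a * cmod b.
Proof. by have H := @complexI R; apply: H; rewrite -cmodE normrM !cmodE rmorphM. Qed.
Lemma cmodD (a b : R[i]) : cmod (a + b) <= cmod a + cmod b.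
Proof. by rewrite -lecR; have := ler_normD a b; rewrite !cmodE rmorphD. Qed.
Lemma cmod0 : cmod (0 : R[i]) = 0.
Proof. by have H := @complexI R; apply: H; rewrite -cmodE normr0. Qed.
Lemma cmod_eq0 (z : R[i]) : (cmod z == 0) = (z == 0).
Proof. by rewrite -[z == 0]normr_eq0 cmodE (inj_eq (@complexI R)). Qed.
Lemma cmod_sq (z : R[i]) : cmod z ^+ 2 = complex.Re z ^+ 2 + complex.Im z ^+ 2.
Proof. by rewrite sqr_sqrtr // addr_ge0 // sqr_ge0. Qed.
End Cmod.

Section Coord.
Variables (R : realType) (N : nat) (v : 'I_N -> 'rV[R[i]]_N).
Hypothesis Hv : is_basis v.

Lemma row_basis k : row k (basis_mx v) = v k.
Proof. by apply/rowP => j; rewrite !mxE. Qed.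

Lemma sum_basis (c : 'rV[R[i]]_N) : \sum_k c 0 k *: v k = c *m basis_mx v.
Proof. by rewrite mulmx_sum_row; apply: eq_bigr => k _; rewrite row_basis. Qed.

Lemma coordv_mul (c : 'rV[R[i]]_N) j : coord v (c *m basis_mx v) j = c 0 j.
Proof. by rewrite /coord mulmxK. Qed.

Lemma coordv_decomp w : \sum_k coord v w k *: v k = w.
Proof. by rewrite (sum_basis (w *m invmx (basis_mx v))) mulmxKV. Qed.

Lemma coordv_vec (c : 'I_N -> R[i]) j : coord v (\sum_k c k *: v k) j = c j.
Proof.
have -> : \sum_k c k *: v k = \sum_k (\row_k c k) 0 k *: v k.
  by apply: eq_bigr => k _; rewrite mxE.
by rewrite sum_basis coordv_mul mxE.
Qed.

Lemma coordvD x y j : coord v (x + y) j = coord v x j + coord v y j.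
Proof. by rewrite /coord mulmxDl mxE. Qed.

Lemma coordvZ (c : R[i]) x j : coord v (c *: x) j = c * coord v x j.
Proof. by rewrite /coord -scalemxAl mxE. Qed.

Lemma coordv0 j : coord v 0 j = 0.
Proof. by rewrite /coord mul0mx mxE. Qed.

Lemma coordv_sum (ws : seq 'rV[R[i]]_N) j :
  coord v (\sum_(u <- ws) u) j = \sum_(u <- ws) coord v u j.
Proof.
elim: ws => [|u ws IH]; first by rewrite !big_nil coordv0.
by rewrite !big_cons coordvD IH.
Qed.

Lemma coordv_eq0 w : (forall k, coord v w k = 0) -> w = 0.
Proof.
move=> H; rewrite -[LHS]coordv_decomp big1 // => k _; by rewrite H scale0r.
Qed.

Lemma coordv_single (c : R[i]) k j :
  coord v (c *: v k) j = if j == k then c else 0.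
Proof.
have -> : c *: v k = \sum_l (if l == k then c else 0) *: v l.
  rewrite (@bigD1 _ _ _ _ k xpredT (fun l => (if l == k then c else 0) *: v l)) //=.
  rewrite eqxx big1 ?addr0 // => l /negbTE ->.
  by rewrite scale0r.
by rewrite coordv_vec.
Qed.

End Coord.

Lemma ReD (R : realType) (x y : R[i]) : complex.Re (x + y) = complex.Re x + complex.Re y.
Proof. by case: x => a b; case: y. Qed.

Lemma Re_sum (R : realType) (I : Type) (r : seq I) (F : I -> R[i]) :
  complex.Re (\sum_(k <- r) F k) = \sum_(k <- r) complex.Re (F k).
Proof. exact: (big_morph _ (@ReD R) (erefl _)). Qed.

Lemma Re_conj_sq (R : realType) (c t : R[i]) : complex.Im t = 0 ->
  complex.Re (c * (c * t)^*) = cmod c ^+ 2 * complex.Re t.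
Proof.
rewrite cmod_sq; case: c => a b; case: t => t1 t2 /= ->.
by ring.
Qed.

Lemma Im_self (R : realType) (t : R[i]) : t = t^* -> complex.Im t = 0.
Proof.
move=> H; have := congr1 (@complex.Im R) H; case: t H => a b /= _ Hb.
lra.
Qed.

Section Herm.
Variables (R : realType) (N : nat) (v : 'I_N -> 'rV[R[i]]_N).
Hypothesis Hv : is_basis v.
Variable h : 'rV[R[i]]_N -> 'rV[R[i]]_N -> R[i].
Hypothesis Hh : hermitian_form h.
Hypothesis Horth : forall i j, i != j -> h (v i) (v j) = 0.

Lemma hDl x y z : h (x + y) z = h x z + h y z.
Proof. by case: Hh => H _ _; rewrite -[x]scale1r H mul1r scale1r. Qed.

Lemma h0l z : h 0 z = 0.
Proof.
have := hDl 0 0 z; rewrite addr0 => /(congr1 (fun t => t - h 0 z)).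
by rewrite subrr addrK => /esym.
Qed.

Lemma hZl c x z : h (c *: x) z = c * h x z.
Proof. by case: Hh => H _ _; rewrite -[c *: x]addr0 H h0l addr0. Qed.

Lemma h_sum (F : 'I_N -> 'rV[R[i]]_N) z :
  h (\sum_k F k) z = \sum_k h (F k) z.
Proof. exact: (big_morph (fun x => h x z) (fun x y => hDl x y z) (h0l z)). Qed.

Lemma h_wv w k : h w (v k) = coord v w k * h (v k) (v k).
Proof.
rewrite -{1}(coordv_decomp Hv w) h_sum (bigD1 k) //= big1 ?addr0 ?hZl //.
by move=> l lk; rewrite hZl Horth ?mulr0.
Qed.

Lemma h_ww w : h w w = \sum_k coord v w k * (coord v w k * h (v k) (v k))^*.
Proof.
rewrite -{1}(coordv_decomp Hv w) h_sum; apply: eq_bigr => k _.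
by case: Hh => _ Hc _; rewrite hZl Hc h_wv.
Qed.

Lemma Im_hxx x : complex.Im (h x x) = 0.
Proof. by case: Hh => _ Hc _; apply: Im_self; rewrite -Hc. Qed.

Lemma Re_hxx_ge0 x : 0 <= complex.Re (h x x).
Proof.
have [->|x0] := eqVneq x 0; first by rewrite h0l.
by case: Hh => _ _ Hp; apply/ltW/Hp.
Qed.

Lemma Re_h_ww w :
  complex.Re (h w w) = \sum_k cmod (coord v w k) ^+ 2 * complex.Re (h (v k) (v k)).
Proof.
by rewrite h_ww Re_sum; apply: eq_bigr => k _; rewrite Re_conj_sq // Im_hxx.
Qed.

End Herm.

Lemma sq_le (R : realType) (a b : R) : 0 <= a -> 0 <= b -> a ^+ 2 <= b ^+ 2 -> a <= b.
Proof. by move=> a0 b0; rewrite ler_sqr ?nnegrE. Qed.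

Lemma sq_eq (R : realType) (a b : R) : 0 <= a -> 0 <= b -> a ^+ 2 = b ^+ 2 -> a = b.
Proof.
by move=> a0 b0 e; apply/le_anti/andP; split; apply: sq_le => //; rewrite e.
Qed.

Lemma sum_sq_le (R : realType) (I : finType) (x : I -> R) :
  (forall k, 0 <= x k) -> \sum_k x k ^+ 2 <= (\sum_k x k) ^+ 2.
Proof.
move=> x0; rewrite [X in _ <= X]expr2 mulr_suml; apply: ler_sum => k _.
rewrite expr2 ler_wpM2l // (bigD1 k) //= lerDl; exact: sumr_ge0.
Qed.

Lemma le_sum_term (R : realType) (I : finType) (x : I -> R) k :
  (forall k, 0 <= x k) -> x k <= \sum_k x k.
Proof. by move=> x0; rewrite (bigD1 k) //= lerDl; exact: sumr_ge0. Qed.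


Section NormH.
Variables (R : realType) (N : nat) (v : 'I_N -> 'rV[R[i]]_N).
Hypothesis Hv : is_basis v.
Variable n : 'rV[R[i]]_N -> R.
Hypothesis Hn : hermitian_orth v n.

Lemma herm_ge0 w : 0 <= n w.
Proof. by case: Hn => h [_ -> _]; exact: sqrtr_ge0. Qed.

Lemma herm_pos w : w != 0 -> 0 < n w.
Proof. by case: Hn => h [[_ _ Hp] -> _] w0; rewrite sqrtr_gt0 Hp. Qed.

Lemma herm_sq w :
  n w ^+ 2 = \sum_k cmod (coord v w k) ^+ 2 * n (v k) ^+ 2.
Proof.
case: Hn => h [Hh Hnh Ho]; rewrite !Hnh sqr_sqrtr; last exact: (Re_hxx_ge0 Hh w).
rewrite (Re_h_ww Hv Hh Ho); apply: eq_bigr => k _.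
congr (_ * _); rewrite Hnh sqr_sqrtr //; exact: (Re_hxx_ge0 Hh (v k)).
Qed.

Lemma herm_le_sum w : n w <= \sum_k cmod (coord v w k) * n (v k).
Proof.
apply: sq_le; [exact: herm_ge0| apply: sumr_ge0 => k _; apply: mulr_ge0;
  [exact: cmod_ge0| exact: herm_ge0]|].
rewrite herm_sq; under eq_bigr do rewrite -exprMn.
apply: sum_sq_le => k; apply: mulr_ge0; [exact: cmod_ge0| exact: herm_ge0].
Qed.

Lemma herm_coord_le w k : cmod (coord v w k) * n (v k) <= n w.
Proof.
apply: sq_le; [apply: mulr_ge0; [exact: cmod_ge0| exact: herm_ge0]| exact: herm_ge0|].
rewrite herm_sq exprMn.
rewrite (bigD1 k) //= lerDl; apply: sumr_ge0 => l _.
by apply: mulr_ge0; apply: sqr_ge0.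
Qed.

Lemma hermZ c w : n (c *: w) = cmod c * n w.
Proof.
apply: sq_eq; [exact: herm_ge0| apply: mulr_ge0; [exact: cmod_ge0| exact: herm_ge0]|].
rewrite exprMn !herm_sq mulr_sumr; apply: eq_bigr => k _.
by rewrite coordvZ cmodM; ring.
Qed.

End NormH.

Section IsNorm.
Variables (R : realType) (N : nat) (n : 'rV[R[i]]_N -> R).
Hypothesis Hn : is_norm n.

Lemma isn0 : n 0 = 0.
Proof. by case: Hn => _ HZ _; rewrite -(scale0r (0 : 'rV[R[i]]_N)) HZ cmod0 mul0r. Qed.

Lemma isn_ge0 x : 0 <= n x.
Proof.
have [->|x0] := eqVneq x 0; first by rewrite isn0.
by case: Hn => Hp _ _; apply/ltW/Hp.
Qed.

Lemma isnZ c x : n (c *: x) = cmod c * n x.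
Proof. by case: Hn => _ HZ _; rewrite HZ. Qed.

Lemma isnD x y : n (x + y) <= n x + n y.
Proof. by case: Hn => _ _ HD; rewrite HD. Qed.

Lemma isnN x : n (- x) = n x.
Proof.
rewrite -scaleN1r isnZ; suff -> : cmod (-1 : R[i]) = 1 by rewrite mul1r.
by have H := @complexI R; apply: H; rewrite -cmodE normrN1.
Qed.

Lemma isn_dist x y : `|n x - n y| <= n (x - y).
Proof.
have h1 := isnD (x - y) y; rewrite subrK in h1.
have h2 := isnD (y - x) x; rewrite subrK -opprB isnN in h2.
rewrite ler_norml; apply/andP; split; lra.
Qed.

Lemma isn_sum (I : Type) (r : seq I) (F : I -> 'rV[R[i]]_N) :
  n (\sum_(k <- r) F k) <= \sum_(k <- r) n (F k).
Proof.
elim: r => [|a r IH]; first by rewrite !big_nil isn0.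
rewrite !big_cons; apply: le_trans (isnD _ _) _; exact: lerD.
Qed.

End IsNorm.

Lemma subc_def (R : realType) (a b c d : R) : (a +i* b) - (c +i* d) = (a - c) +i* (b - d).
Proof. by []. Qed.

Lemma lip_cont (R : realType) n (f : 'rV[R]_n -> R) L : 0 <= L ->
  (forall x y, `|f x - f y| <= L * `|x - y|) -> continuous f.
Proof.
move=> L0 Hf x; have FF : ProperFilter (nbhs x) by apply: nbhs_pfilter.
apply/cvgrPdist_lt => e e0.
have e1 : 0 < e / (L + 1) by rewrite divr_gt0 // ltr_wpDl.
near=> t.
apply: (le_lt_trans (Hf x t)).
have : `|x - t| < e / (L + 1) by near: t; apply: (@cvgr_dist_lt _ _ _ (nbhs x) _ id x) => //; exact: cvg_id.
move=> h; apply: (le_lt_trans (ler_wpM2l L0 (ltW h))).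
rewrite mulrA ltr_pdivrMr ?ltr_wpDl //; nra.
Unshelve. all: by end_near.
Qed.

Lemma entry_le (R : realType) n (z : 'rV[R]_n) j : `|z 0 j| <= `|z|.
Proof.
rewrite [leRHS]/Num.norm /= mx_normrE.
exact: (le_bigmax _ (fun ij : 'I_1 * 'I_n => `|z ij.1 ij.2|) (0, j)).
Qed.

Lemma cmod_le (R : realType) (a b : R) : cmod (a +i* b) <= `|a| + `|b|.
Proof.
apply: sq_le; [exact: cmod_ge0| by rewrite addr_ge0|].
rewrite cmod_sq /=.
have ha : `|a| ^+ 2 = a ^+ 2 by rewrite real_normK // num_real.
have hb : `|b| ^+ 2 = b ^+ 2 by rewrite real_normK // num_real.
have := normr_ge0 a; have := normr_ge0 b; nra.
Qed.

Lemma cmod_real (R : realType) (r : R) : cmod (r%:C) = `|r|.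
Proof. by rewrite /cmod /= expr0n /= addr0 sqrtr_sqr. Qed.

Section Equiv.
Variables (R : realType) (N : nat) (v : 'I_N -> 'rV[R[i]]_N).
Hypothesis Hv : is_basis v.
Hypothesis HN : (0 < N)%N.
Variable n' : 'rV[R[i]]_N -> R.
Hypothesis Hn' : is_norm n'.

Definition cplx (z : 'rV[R]_(N + N)) (k : 'I_N) : R[i] :=
  (z 0 (lshift N k)) +i* (z 0 (rshift N k)).
Definition vecz z := \sum_k cplx z k *: v k.

Lemma cmod_cplx z k : cmod (cplx z k) <= 2 * `|z|.
Proof.
apply: le_trans (cmod_le _ _) _; rewrite mulr2n mulrDl mul1r.
by apply: lerD; apply: entry_le.
Qed.

Lemma vecz_sub z z' : vecz z - vecz z' = vecz (z - z').
Proof.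
rewrite /vecz -sumrB; apply: eq_bigr => k _; rewrite -scalerBl; congr (_ *: _).
by rewrite /cplx !mxE subc_def.
Qed.

Lemma isn_vec (c : 'I_N -> R[i]) :
  n' (\sum_k c k *: v k) <= \sum_k cmod (c k) * n' (v k).
Proof.
apply: le_trans (isn_sum Hn' _ _) _; apply: ler_sum => k _.
by rewrite (isnZ Hn').
Qed.

Definition Lc := 2 * \sum_k n' (v k).

Lemma f_lip z z' : `|n' (vecz z) - n' (vecz z')| <= Lc * `|z - z'|.
Proof.
apply: le_trans (isn_dist Hn' _ _) _; rewrite vecz_sub.
apply: le_trans (isn_vec _) _; rewrite /Lc mulr_sumr mulr_suml.
apply: ler_sum => k _; rewrite mulrAC.
apply: ler_wpM2r; first exact: (isn_ge0 Hn').
exact: cmod_cplx.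
Qed.

Lemma Lc_ge0 : 0 <= Lc.
Proof. by rewrite /Lc mulr_ge0 // sumr_ge0 // => k _; apply: (isn_ge0 Hn'). Qed.

Lemma f_cont : continuous (fun z => n' (vecz z)).
Proof. exact: (lip_cont Lc_ge0 f_lip). Qed.

End Equiv.

Lemma basis_neq0 (R : realType) (N : nat) (v : 'I_N -> 'rV[R[i]]_N) :
  is_basis v -> forall k, v k != 0.
Proof.
move=> Hv k; apply/eqP => vk0.
have := coordv_single Hv 1 k k; rewrite eqxx vk0 scaler0 coordv0 => /eqP.
by rewrite eq_sym oner_eq0.
Qed.

Lemma herm0 (R : realType) (N : nat) (v : 'I_N -> 'rV[R[i]]_N) n :
  is_basis v -> hermitian_orth v n -> n 0 = 0.
Proof.
move=> Hv Hn; have := hermZ Hv Hn 0 0; rewrite scale0r cmod0 mul0r; exact.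
Qed.

Lemma split_l (m n : nat) (k : 'I_m) : fintype.split (lshift n k) = inl k.
Proof. exact: (unsplitK (inl k)). Qed.
Lemma split_r (m n : nat) (k : 'I_n) : fintype.split (rshift m k) = inr k.
Proof. exact: (unsplitK (inr k)). Qed.

Lemma complex_eta (R : realType) (c : R[i]) : (complex.Re c) +i* (complex.Im c) = c.
Proof. by case: c. Qed.

Lemma cplx_eq0 (R : realType) (a b : R) : a +i* b = 0 -> a = 0 /\ b = 0.
Proof. by case. Qed.

Lemma cplxZ (R : realType) (N : nat) (r : R) (z : 'rV[R]_(N + N)) k :
  cplx (r *: z) k = r%:C * cplx z k.
Proof. by rewrite /cplx !mxE /=; congr (_ +i* _); ring. Qed.

Lemma norm_lower (R : realType) (N : nat) (v : 'I_N -> 'rV[R[i]]_N)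
  (Hv : is_basis v) (HN : (0 < N)%N) n' (Hn' : is_norm n') n
  (Hn : hermitian_orth v n) :
  exists2 m, 0 < m & forall w, m * n w <= n' w.
Proof.
pose K := [set z : 'rV[R]_(N + N) | `|z| = 1]%classic.
have i0 : 'I_(N + N) := lshift N (Ordinal HN).
have K0 : (K !=set0)%classic.
  exists (const_mx 1); rewrite /K /= /Num.norm /= mx_normrE.
  apply/le_anti/andP; split.
    by apply: bigmax_le => // ij _; rewrite mxE normr1.
  apply: le_trans (le_bigmax _ _ (0, i0)); by rewrite mxE normr1.
have cK : compact K.
  apply: bounded_closed_compact.
    exists 1; split; first by rewrite num_real.
    by move=> M M1 z Kz /=; rewrite Kz ltW.
  have -> : K = ((fun z => `|z|) @^-1` [set x | x = 1])%classic by [].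
  apply: preimage_closed; last exact: closed_eq.
  by move=> z _; exact: norm_continuous.
have [c Kc cmin] := EVT_min_rV K0 cK (continuous_subspaceT (A := K) (f_cont (v := v) Hn')).
set m0 := n' (vecz v c).
have vecz0 : forall z, vecz v z = 0 -> z = 0.
  move=> z z0; apply/rowP => j; rewrite mxE.
  have Hk : forall k, cplx z k = 0.
    by move=> k; rewrite -(coordv_vec Hv (cplx z)) -/(vecz v z) z0 coordv0.
  rewrite -(splitK j); case: (fintype.split j) => k /=.
    by case: (cplx_eq0 (Hk k)).
  by case: (cplx_eq0 (Hk k)).
have m0pos : 0 < m0.
  case: Hn' => Hp _ _; apply: Hp; apply/eqP => /vecz0 c0.
  move: Kc; rewrite inE /K /= c0 normr0 => /esym/eqP; by rewrite oner_eq0.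
pose B := 2 * \sum_k n (v k).
have Bpos : 0 < B.
  rewrite /B mulr_gt0 // (bigD1 (Ordinal HN)) //=.
  apply: ltr_pwDl; first exact: (herm_pos Hn (basis_neq0 Hv _)).
  by apply: sumr_ge0 => k _; exact: (herm_ge0 Hn).
exists (m0 / B); first by rewrite divr_gt0.
move=> w; have [->|w0] := eqVneq w 0.
  by rewrite (herm0 Hv Hn) mulr0 (isn0 Hn').
pose z := \row_j (match fintype.split j with
                  | inl k => complex.Re (coord v w k)
                  | inr k => complex.Im (coord v w k) end).
have cplxz : forall k, cplx z k = coord v w k.
  by move=> k; rewrite /cplx !mxE split_l split_r complex_eta.
have vz : vecz v z = w.
  by rewrite /vecz; under eq_bigr do rewrite cplxz; exact: coordv_decomp.
have z0 : z != 0 by apply/eqP => z0; move: w0; rewrite -vz z0 /vecz big1 ?eqxx // => k _; rewrite (_ : cplx 0 k = 0) ?scale0r // /cplx !mxE.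
pose rho := `|z|.
have rho0 : 0 < rho by rewrite /rho normr_gt0.
have Kz' : (rho^-1 *: z) \in K.
  rewrite inE /K /= normrZ ger0_norm ?mulVf ?gt_eqF //.
  by rewrite invr_ge0 ltW.
have vz' : vecz v (rho^-1 *: z) = (rho^-1)%:C *: w.
  rewrite -vz /vecz scaler_sumr; apply: eq_bigr => k _.
  by rewrite cplxZ scalerA.
have h1 := cmin _ Kz'; rewrite vz' (isnZ Hn') cmod_real ger0_norm in h1; last first.
  by rewrite invr_ge0 ltW.
have h2 : n w <= rho * B.
  apply: le_trans (herm_le_sum Hv Hn w) _.
  rewrite /B mulrA mulr_sumr; apply: ler_sum => k _.
  apply: ler_wpM2r; first exact: (herm_ge0 Hn).
  rewrite -cplxz mulrC; exact: cmod_cplx.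
have h3 : rho * m0 <= n' w.
  by have := ler_wpM2l (ltW rho0) h1; rewrite mulrA mulfV ?gt_eqF // mul1r.
apply: le_trans h3; apply: le_trans (ler_wpM2l _ h2) _.
  by rewrite divr_ge0 // ltW.
rewrite (_ : m0 / B * (rho * B) = rho * m0) //.
by field; rewrite gt_eqF.
Qed.

Local Open Scope classical_set_scope.

Section SuccMin.
Variables (R : realType) (N : nat).
Variables (n1 n2 : 'rV[R[i]]_N -> R) (m M : R).
Hypothesis Hb : forall w, w != 0 -> m <= ln (n2 w / n1 w) <= M.

Definition Sset (W : 'M[R[i]]_N) := [set y | exists w : 'rV[R[i]]_N,
  [/\ (w <= W)%MS, w != 0 & y = ln (n2 w / n1 w)]].

Lemma Sset_lb W : has_lbound (Sset W).
Proof. by exists m => y [w [_ w0 ->]]; case/andP: (Hb w0). Qed.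

Lemma nz_row_ex (W : 'M[R[i]]_N) : W != 0 -> exists k, row k W != 0.
Proof.
move=> W0; case: (pickP (fun k => row k W != 0)) => [k rk | H]; first by exists k.
move: W0; suff -> : W = 0 by rewrite eqxx.
by apply/row_matrixP => k; move: (H k) => /negbFE/eqP ->; rewrite row0.
Qed.

Lemma Sset_inf W : W != 0 -> m <= inf (Sset W) <= M.
Proof.
move=> /nz_row_ex [k rk].
have Sy : Sset W (ln (n2 (row k W) / n1 (row k W))) by exists (row k W); split => //; exact: row_sub.
apply/andP; split.
  apply: lb_le_inf; first by eexists; exact: Sy.
  by move=> y [w [_ w0 ->]]; case/andP: (Hb w0).
apply: le_trans (ge_inf (Sset_lb W) Sy) _.
by case/andP: (Hb rk).
Qed.

Definition Oset (i : 'I_N) := [set x | exists W : 'M[R[i]]_N,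
  \rank W = i.+1 /\ x = inf (Sset W)].

Lemma succ_minE i : succ_min n1 n2 i = sup (Oset i).
Proof. by []. Qed.

Lemma Oset_ub i : ubound (Oset i) M.
Proof.
move=> x [W [rW ->]]; have W0 : W != 0.
  by apply/eqP => W0; move: rW; rewrite W0 mxrank0.
by case/andP: (Sset_inf W0).
Qed.

Lemma Oset_ne i : Oset i !=set0.
Proof.
exists (inf (Sset (pid_mx i.+1))); exists (pid_mx i.+1); split => //.
by rewrite rank_pid_mx.
Qed.

Lemma sm_bounds i : m <= succ_min n1 n2 i <= M.
Proof.
rewrite succ_minE; apply/andP; split; last by apply: ge_sup; [exact: Oset_ne | exact: Oset_ub].
have [x Ox] : Oset i !=set0 by exact: Oset_ne.
apply: le_trans (ub_le_sup _ Ox); last by exists M; exact: Oset_ub.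
case: Ox => W [rW ->]; have W0 : W != 0.
  by apply/eqP => W0; move: rW; rewrite W0 mxrank0.
by case/andP: (Sset_inf W0).
Qed.

Lemma sm_last (i : 'I_N) : i.+1 = N -> forall w0, w0 != 0 ->
  succ_min n1 n2 i <= ln (n2 w0 / n1 w0).
Proof.
move=> iN w0 w00; rewrite succ_minE; apply: ge_sup; first exact: Oset_ne.
move=> x [W [rW ->]]; apply: ge_inf; first exact: Sset_lb.
exists w0; split => //; apply: submx_full; by rewrite /row_full rW iN.
Qed.

Hypothesis Hz1 : forall (c : R[i]) w, n1 (c *: w) = cmod c * n1 w.
Hypothesis Hz2 : forall (c : R[i]) w, n2 (c *: w) = cmod c * n2 w.

Lemma sm_first (i : 'I_N) : i = 0 :> nat -> forall w0, w0 != 0 ->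
  ln (n2 w0 / n1 w0) <= succ_min n1 n2 i.
Proof.
move=> i0 w0 w00; rewrite succ_minE.
have -> : ln (n2 w0 / n1 w0) = inf (Sset <<w0>>%MS).
  have -> : Sset <<w0>>%MS = [set ln (n2 w0 / n1 w0)].
    apply/seteqP; split => y.
      case=> w [ww0 w0' ->]; rewrite genmxE in ww0.
      case/sub_rVP: ww0 => a wa; rewrite /= wa Hz1 Hz2.
      have a0 : cmod a != 0.
        by rewrite cmod_eq0; apply: contra w0' => /eqP a0; rewrite wa a0 scale0r.
      by rewrite invfM mulrACA mulfV // mul1r.
    move=> ->; exists w0; split => //; by rewrite genmxE.
  by rewrite inf1.
apply: ub_le_sup; first by exists M; exact: Oset_ub.
exists <<w0>>%MS; split => //; by rewrite genmxE rank_rV w00 i0.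
Qed.

End SuccMin.

Local Open Scope classical_set_scope.

Lemma cmod_sum (R : realType) (I : Type) (r : seq I) (F : I -> R[i]) :
  cmod (\sum_(k <- r) F k) <= \sum_(k <- r) cmod (F k).
Proof.
elim: r => [|x r IH]; first by rewrite !big_nil cmod0.
by rewrite !big_cons; apply: le_trans (cmodD _ _) _; rewrite lerD2l.
Qed.

Section Iota.
Variables (R : realType) (N : nat) (v : 'I_N -> 'rV[R[i]]_N).
Hypothesis Hv : is_basis v.
Hypothesis HN : (0 < N)%N.
Variable a : 'I_N -> R.
Variables (nrm nrm' n1 : 'rV[R[i]]_N -> R).
Hypothesis Hnrm : hermitian_orth v nrm.
Hypothesis Hnrm' : is_norm nrm'.
Hypothesis Hn1 : is_iota v nrm a n1.
Variable D : R.
Hypothesis HD1 : forall w, nrm' w <= expR D * nrm w.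
Hypothesis HD2 : forall w, nrm w <= expR D * nrm' w.

Lemma na_ge0 u : 0 <= na_norm v a u.
Proof.
rewrite /na_norm; apply: (big_ind (fun x => 0 <= x)).
- by [].
- by move=> x y hx hy; rewrite le_max hx.
- by move=> k _; exact/ltW/expR_gt0.
Qed.

Lemma na_le_single c k : na_norm v a (c *: v k) <= expR (- a k).
Proof.
rewrite /na_norm; apply: bigmax_le; first exact/ltW/expR_gt0.
move=> j; rewrite (coordv_single Hv); have [->|jk] := eqVneq j k; first by [].
by rewrite eqxx.
Qed.

Lemma na_ge_term u k : coord v u k != 0 -> expR (- a k) <= na_norm v a u.
Proof. by move=> uk; rewrite /na_norm; apply: le_bigmax_cond. Qed.

Definition Iset w := [set s | exists ws : seq 'rV[R[i]]_N,
  \sum_(u <- ws) u = w /\ s = \sum_(u <- ws) nrm' u * na_norm v a u].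

Lemma iota1E w : iota1 v nrm' a w = inf (Iset w).
Proof. by []. Qed.

Lemma Iset_ge0 w s : Iset w s -> 0 <= s.
Proof.
case=> ws [_ ->]; apply: sumr_ge0 => u _; apply: mulr_ge0.
  exact: (isn_ge0 Hnrm'). exact: na_ge0.
Qed.

Definition ws0 w := [seq coord v w k *: v k | k <- index_enum 'I_N].

Lemma Iset_ws0 w : Iset w (\sum_(u <- ws0 w) nrm' u * na_norm v a u).
Proof. by exists (ws0 w); split => //; rewrite big_map; exact: coordv_decomp. Qed.

Lemma Hn1h : hermitian_orth v n1.
Proof. by case: Hn1. Qed.

Lemma n1_vk k : n1 (v k) = nrm (v k) * expR (- a k).
Proof. by case: Hn1. Qed.

Lemma iota_upper w : iota1 v nrm' a w <= N%:R * expR D * n1 w.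
Proof.
rewrite iota1E; apply: le_trans (ge_inf _ (Iset_ws0 w)) _.
  by exists 0 => s /Iset_ge0.
rewrite /ws0 big_map -mulrA mulr_natl -[X in _ *+ X]card_ord -sumr_const.
apply: ler_sum => k _.
have [->|ck] := eqVneq (coord v w k) 0.
  rewrite scale0r (isn0 Hnrm') mul0r mulr_ge0 ?expR_ge0 //.
  exact: (herm_ge0 Hn1h).
apply: le_trans (ler_wpM2l (isn_ge0 Hnrm' _) (na_le_single _ _)) _.
apply: le_trans (ler_wpM2r (ltW (expR_gt0 _)) (HD1 _)) _.
rewrite (hermZ Hv Hnrm) -mulrA ler_wpM2l ?expR_ge0 // -mulrA -n1_vk.
exact: (herm_coord_le Hv Hn1h).
Qed.

Lemma iota_lower w : (N%:R * expR D)^-1 * n1 w <= iota1 v nrm' a w.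
Proof.
have Np : 0 < N%:R * expR D :> R by rewrite mulr_gt0 ?expR_gt0 // ltr0n.
rewrite iota1E; apply: lb_le_inf; first by eexists; exact: Iset_ws0.
move=> s [ws [wsw ->]]; rewrite ler_pdivrMl //.
apply: le_trans (herm_le_sum Hv Hn1h w) _.
rewrite -mulrA mulr_natl -[X in _ *+ X]card_ord -sumr_const; apply: ler_sum => k _.
rewrite n1_vk -wsw coordv_sum.
apply: le_trans (ler_wpM2r _ (cmod_sum _ _)) _.
  by rewrite mulr_ge0 ?expR_ge0 // (herm_ge0 Hnrm).
rewrite mulr_suml mulr_sumr; apply: ler_sum => u _.
apply: le_trans (_ : nrm u * na_norm v a u <= _).
  have [->|cuk] := eqVneq (coord v u k) 0.
    by rewrite cmod0 !mul0r mulr_ge0 ?na_ge0 // (herm_ge0 Hnrm).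
  rewrite mulrA; apply: ler_pM.
  - by rewrite mulr_ge0 ?cmod_ge0 // (herm_ge0 Hnrm).
  - exact: expR_ge0.
  - exact: (herm_coord_le Hv Hnrm).
  - exact: na_ge_term.
rewrite mulrA; apply: ler_wpM2r; first exact: na_ge0.
exact: HD2.
Qed.

End Iota.

Lemma ratio_ln_le (R : realType) (x y c : R) : 0 < x -> 0 < y -> x <= expR c * y ->
  ln (x / y) <= c.
Proof.
move=> x0 y0 h; rewrite -[c in _ <= c]expRK ler_ln ?posrE ?divr_gt0 ?expR_gt0 //.
by rewrite ler_pdivrMr.
Qed.

Lemma ratio_ln_ge (R : realType) (x y c : R) : 0 < x -> 0 < y -> y <= expR c * x ->
  - c <= ln (x / y).
Proof.
move=> x0 y0 h; rewrite -[- c]expRK ler_ln ?posrE ?divr_gt0 ?expR_gt0 //.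
rewrite expRN ler_pdivlMr // mulrC ler_pdivrMr ?expR_gt0 //.
by rewrite mulrC.
Qed.

Theorem lemma3p1 (R : realType) (N : nat) (HN : (0 < N)%N)
  (v : 'I_N -> 'rV[R[i]]_N) (Hv : is_basis v) (a : 'I_N -> R)
  (nrm : 'rV[R[i]]_N -> R) (Hnrm : hermitian_orth v nrm)
  (nrm' : 'rV[R[i]]_N -> R) (Hnrm' : is_norm nrm')
  (n1 : 'rV[R[i]]_N -> R) (Hn1 : is_iota v nrm a n1)
  (p : \bar R) (Hp : (1 <= p)%E) :
  dist_p p n1 (iota1 v nrm' a) <= dist_p +oo%E nrm nrm' + ln (N%:R : R).
Proof.
have [m0 m0pos Hlow] := norm_lower Hv HN Hnrm' Hnrm.
pose Mu := \sum_k nrm' (v k) / nrm (v k) + 1.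
have nvk : forall k, 0 < nrm (v k) by move=> k; apply: (herm_pos Hnrm (basis_neq0 Hv k)).
have Mupos : 0 < Mu.
  by rewrite /Mu ltr_pwDr // sumr_ge0 // => k _; rewrite divr_ge0 ?(isn_ge0 Hnrm') // ltW.
have Hup : forall w, nrm' w <= Mu * nrm w.
  move=> w; rewrite -{1}(coordv_decomp Hv w).
  apply: le_trans (isn_vec v Hnrm' (coord v w)) _.
  rewrite /Mu mulrDl mul1r.
  apply: le_trans (_ : _ <= (\sum_k nrm' (v k) / nrm (v k)) * nrm w) _; last first.
    by rewrite lerDl (herm_ge0 Hnrm).
  rewrite mulr_suml; apply: ler_sum => k _.
  rewrite mulrAC ler_pdivlMr // mulrAC [nrm' (v k) * _]mulrC.
  apply: ler_wpM2r; first exact: (isn_ge0 Hnrm').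
  exact: (herm_coord_le Hv Hnrm).
have Hb : forall w, w != 0 -> ln m0 <= ln (nrm' w / nrm w) <= ln Mu.
  move=> w w0; have nw := herm_pos Hnrm w0.
  have n'w : 0 < nrm' w by case: Hnrm' => Hp' _ _; apply: Hp'.
  have r0 : 0 < nrm' w / nrm w by rewrite divr_gt0.
  rewrite !ler_ln ?posrE //; apply/andP; split.
    by rewrite ler_pdivlMr // Hlow.
  by rewrite ler_pdivrMr // Hup.
set D := dist_p +oo%E nrm nrm'.
have DE : D = \big[Num.max/0]_(i < N) `|succ_min nrm nrm' i| by [].
have i0 : (Ordinal HN : 'I_N) = 0 :> nat by [].
have iL : (N.-1 < N)%N by rewrite prednK.
have iLN : (Ordinal iL).+1 = N by rewrite /= prednK.
have Dge : forall i, `|succ_min nrm nrm' i| <= D.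
  by move=> i; rewrite DE; exact: (le_bigmax _ (fun i => `|succ_min nrm nrm' i|) i).
have D0 : 0 <= D by apply: le_trans (Dge (Ordinal HN)).
have HD1 : forall w, nrm' w <= expR D * nrm w.
  move=> w; have [->|w0] := eqVneq w 0.
    by rewrite (isn0 Hnrm') (herm0 Hv Hnrm) mulr0.
  have nw := herm_pos Hnrm w0.
  have h := sm_first Hb (hermZ Hv Hnrm) (isnZ Hnrm') i0 w0.
  have h' : ln (nrm' w / nrm w) <= D.
    by apply: le_trans h _; apply: le_trans (ler_norm _) (Dge _).
  rewrite -ler_pdivrMr // -[D]expRK in h' *.
  rewrite -(@lnK _ (nrm' w / nrm w)) ?posrE ?divr_gt0 //; last by case: Hnrm' => Hp' _ _; apply: Hp'.
  by rewrite ler_expR.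
have HD2 : forall w, nrm w <= expR D * nrm' w.
  move=> w; have [->|w0] := eqVneq w 0.
    by rewrite (isn0 Hnrm') (herm0 Hv Hnrm) mulr0.
  have nw := herm_pos Hnrm w0.
  have n'w : 0 < nrm' w by case: Hnrm' => Hp' _ _; apply: Hp'.
  have h := sm_last Hb iLN w0.
  have h' : - D <= ln (nrm' w / nrm w).
    apply: le_trans h; rewrite lerNl; apply: le_trans (Dge (Ordinal iL)).
    by rewrite -normrN ler_norm.
  have : expR (- D) <= nrm' w / nrm w.
    by rewrite -(@lnK _ (nrm' w / nrm w)) ?posrE ?divr_gt0 // ler_expR.
  rewrite expRN ler_pdivlMr // => h2.
  by rewrite -ler_pdivrMl ?expR_gt0 // mulrC.
pose I := iota1 v nrm' a.
have Hn1h := Hn1h Hn1.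
have lnN : 0 <= ln (N%:R : R) by apply: ln_ge0; rewrite ler1n.
set B := D + ln (N%:R : R).
have Npos : 0 < N%:R * expR D :> R by rewrite mulr_gt0 ?expR_gt0 // ltr0n.
have Hb2 : forall w, w != 0 -> - B <= ln (I w / n1 w) <= B.
  move=> w w0; have n1w := herm_pos Hn1h w0.
  have lo := iota_lower Hv HN Hnrm Hn1 HD2 w.
  have up := iota_upper Hv Hnrm Hnrm' Hn1 HD1 w.
  have Iw : 0 < I w by apply: lt_le_trans lo; rewrite mulr_gt0 // invr_gt0.
  have eB : expR B = N%:R * expR D.
    by rewrite /B expRD lnK ?posrE ?ltr0n // mulrC.
  apply/andP; split.
    apply: ratio_ln_ge => //; rewrite eB.
    by rewrite -ler_pdivrMl.
  by apply: ratio_ln_le => //; rewrite eB.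
have Hsm : forall i, `|succ_min n1 I i| <= B.
  by move=> i; rewrite ler_norml; exact: (sm_bounds Hb2 i).
have B0 : 0 <= B by rewrite addr_ge0.
case: p Hp => [r| |] Hp; last by [].
  2: by rewrite /=; apply: bigmax_le => // i _; exact: Hsm.
rewrite lee_fin in Hp.
have r0 : 0 < r by apply: lt_le_trans Hp.
have rV0 : 0 <= r^-1 by rewrite invr_ge0 ltW.
apply: le_trans (_ : (powR B r) `^ r^-1 <= B); last first.
  by rewrite -powRrM mulfV ?gt_eqF // powRr1.
apply: ge0_ler_powR => //; rewrite ?nnegrE ?powR_ge0 //.
  by rewrite mulr_ge0 ?invr_ge0 // sumr_ge0 // => i _; exact: powR_ge0.
have NR : 0 < N%:R :> R by rewrite ltr0n.
rewrite ler_pdivrMl //.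
apply: (@le_trans _ _ (\sum_(i < N) powR B r)).
  apply: ler_sum => i _; apply: ge0_ler_powR; rewrite ?nnegrE //; first exact: ltW.
by rewrite sumr_const card_ord mulr_natl.
Qed.
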